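(* Let $\mathcal{C}$ be a clutter whose vertex set is a subset of $\{x_1,\dots,x_n\}$, $S=\mathbb{K}[x_1,\dots,x_n]$ with $\mathbb{K}$ a field. If $\{e_1,\dots,e_s\}$ is a 2-collage in $\mathcal{C}$, then \[ \operatorname{sreg}(S/I(\mathcal{C}))\le\sum_{i=1}^s(|e_i|-1). \]
   Context: A clutter $\mathcal{C}$ consists of a finite vertex set and a collection $E(\mathcal{C})$ of subsets (edges), no edge containing another; vertices are identified with variables and $I(\mathcal{C})=(\prod_{x\in e}x : e\in E(\mathcal{C}))$ is the edge ideal. A 2-collage for $\mathcal{C}$ is a subset $C\subseteq E(\mathcal{C})$ such that for each $e\in E(\mathcal{C})$ there is a vertex $v$ with $e\setminus\{v\}$ contained in some edge of $C$. Stanley regularity: for a squarefree monomial ideal $I\subset S$, a squarefree Stanley decomposition of $S/I$ is a decomposition $S/I=\bigoplus_{i=1}^r u_i\mathbb{K}[Z_i]$ as $\mathbb{K}$-vector spaces, where $Z_i\subseteq\{x_1,\dots,x_n\}$, $u_i$ are (images of) squarefree monomials with $\operatorname{supp}(u_i)\subseteq Z_i$, and each $u_i\mathbb{K}[Z_i]$ is free over $\mathbb{K}[Z_i]$. Its Stanley regularity is $\max_i\deg(u_i)$, and $\operatorname{sreg}(S/I)$ is the minimum over all such decompositions. *)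

(* Defs.v *)
From HB Require Import structures.
From mathcomp Require Import all_boot all_algebra.
From mathcomp Require Import mpoly.
Set Implicit Arguments. Unset Strict Implicit. Unset Printing Implicit Defensive.
Import GRing.Theory.
Local Open Scope ring_scope.

Definition is_clutter (n : nat) (V : {set 'I_n}) (E : {set {set 'I_n}}) : Prop :=
  (forall e, e \in E -> e \subset V) /\
  (forall e f, e \in E -> f \in E -> e \subset f -> e = f).

Definition two_collage (n : nat) (V : {set 'I_n}) (E C : {set {set 'I_n}}) : Prop :=
  C \subset E /\
  (forall e, e \in E -> exists v, v \in V /\ exists2 c, c \in C & e :\ v \subset c).

Definition sqmon (K : fieldType) (n : nat) (A : {set 'I_n}) : {mpoly K[n]} :=
  \prod_(i in A) 'X_i.

Definition in_edge_ideal (K : fieldType) (n : nat) (E : {set {set 'I_n}})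
    (g : {mpoly K[n]}) : Prop :=
  exists h : {set 'I_n} -> {mpoly K[n]}, g = \sum_(e in E) h e * sqmon K e.

Definition in_subring (K : fieldType) (n : nat) (Z : {set 'I_n})
    (p : {mpoly K[n]}) : Prop :=
  forall m, m \in msupp p -> forall i : 'I_n, i \notin Z -> m i = 0%N.

(* A squarefree Stanley decomposition S/I = (+)_{i<r} u_i K[Z_i], with
   u_i = sqmon (U i), supp(u_i) = U i ⊆ Z i, is given by r, U, Z such that the
   K-linear map  (f_i)_i in prod_i K[Z_i]  |->  sum_i u_i f_i  mod I
   is a bijection onto S/I (surjectivity = the summands span S/I;
   injectivity = the sum is direct and each u_i K[Z_i] is free over K[Z_i]). *)
Definition stanley_decomposition (K : fieldType) (n : nat) (E : {set {set 'I_n}})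
    (r : nat) (U Z : 'I_r -> {set 'I_n}) : Prop :=
  (forall i, U i \subset Z i) /\
  (forall g : {mpoly K[n]}, exists f : 'I_r -> {mpoly K[n]},
      (forall i, in_subring (Z i) (f i)) /\
      in_edge_ideal E (g - \sum_(i < r) sqmon K (U i) * f i)) /\
  (forall f : 'I_r -> {mpoly K[n]},
      (forall i, in_subring (Z i) (f i)) ->
      in_edge_ideal E (\sum_(i < r) sqmon K (U i) * f i) ->
      forall i, f i = 0).

(* sreg(S/I(C)) <= b : some squarefree Stanley decomposition has Stanley
   regularity max_i deg(u_i) = max_i #|U i| at most b. *)
Definition sreg_le (K : fieldType) (n : nat) (E : {set {set 'I_n}}) (b : nat) : Prop :=
  exists r (U Z : 'I_r -> {set 'I_n}),
    stanley_decomposition K E U Z /\ forall i, (#|U i| <= b)%N.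

(* Main.v *)
Require Import Defs.
From HB Require Import structures.
From mathcomp Require Import all_boot all_algebra.
From mathcomp Require Import mpoly.
From mathcomp Require Import zify.
Set Implicit Arguments. Unset Strict Implicit. Unset Printing Implicit Defensive.
Import GRing.Theory.
Local Open Scope ring_scope.

Section S.
Variables (K : fieldType) (n : nat).
Implicit Types (A B : {set 'I_n}) (p q : {mpoly K[n]}) (m : 'X_{1..n}).

Definition mset A : 'X_{1..n} := [multinom ((i \in A) : nat) | i < n].
Lemma msetE A i : mset A i = (i \in A). Proof. by rewrite mnmE. Qed.

Lemma sqmonE A : sqmon K A = 'X_[mset A].
Proof.
rewrite /sqmon mprodXE; congr mpolyX; apply/mnmP => i.
rewrite mnm_sumE msetE.
case: (boolP (i \in A)) => iA.
  rewrite (bigD1 i) //= mnm1E eqxx big1 ?addn0 // => j /andP[_ ji].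
  by rewrite mnm1E (negbTE ji).
by rewrite big1 // => j jA; rewrite mnm1E; apply/eqP; rewrite eqb0; apply: contraNN iA => /eqP <-.
Qed.

Definition supp m := [set i | m i != 0%N].

Lemma mcoeffMX2 p m k :
  (p * 'X_[m])@_k = if (m <= k)%MM then p@_(k - m)%MM else 0.
Proof.
case: ifP => mk.
  by rewrite -{1}(submK mk) addmC mcoeffMX.
apply/eqP; rewrite mcoeff_eq0; apply/negP.
rewrite (perm_mem (msuppMX _ _)) => /mapP[m' _ km].
by rewrite km lem_addr in mk.
Qed.

Lemma mset_le A m : (mset A <= m)%MM = (A \subset supp m).
Proof.
apply/mnm_lepP/subsetP => [H i iA|H i]; rewrite ?inE.
  by have := H i; rewrite msetE iA -lt0n.
by rewrite msetE; case: (boolP (i \in A)) => // /H; rewrite inE lt0n.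
Qed.


Section Ideal.
Variable E : {set {set 'I_n}}.

Lemma ideal0 : in_edge_ideal E (0 : {mpoly K[n]}).
Proof. by exists (fun _ => 0); rewrite big1 // => e _; rewrite mul0r. Qed.

Lemma idealD p q : in_edge_ideal E p -> in_edge_ideal E q -> in_edge_ideal E (p + q).
Proof.
move=> [h1 ->] [h2 ->]; exists (fun e => h1 e + h2 e).
by rewrite -big_split /=; apply: eq_bigr => e _; rewrite mulrDl.
Qed.

Lemma idealM p q : in_edge_ideal E q -> in_edge_ideal E (p * q).
Proof.
move=> [h ->]; exists (fun e => p * h e).
by rewrite mulr_sumr; apply: eq_bigr => e _; rewrite mulrA.
Qed.

Lemma ideal_sum (T : Type) (r : seq T) (P : pred T) (F : T -> {mpoly K[n]}) :
  (forall x, P x -> in_edge_ideal E (F x)) -> in_edge_ideal E (\sum_(x <- r | P x) F x).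
Proof.
move=> H; elim/big_rec: _ => [|x y Px Hy]; first exact: ideal0.
exact: idealD (H _ Px) Hy.
Qed.

Lemma ideal_gen e : e \in E -> in_edge_ideal E (sqmon K e).
Proof.
move=> eE; exists (fun f => (f == e)%:R).
rewrite (bigD1 e) //= eqxx mul1r big1 ?addr0 // => f /andP[_ /negbTE ->].
by rewrite mul0r.
Qed.

Definition face A := [forall e in E, ~~ (e \subset A)].

Lemma faceP A : reflect (forall e, e \in E -> ~~ (e \subset A)) (face A).
Proof. exact: forall_inP. Qed.

Lemma face_sub A B : A \subset B -> face B -> face A.
Proof.
move=> AB /faceP H; apply/faceP => e eE; apply: contra (H e eE) => eA.
exact: subset_trans AB.
Qed.

Lemma ideal_supp p m : in_edge_ideal E p -> m \in msupp p -> ~~ face (supp m).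
Proof.
move=> [h ->]; rewrite mcoeff_msupp; apply: contraNN => /faceP F.
rewrite raddf_sum /=; apply/eqP; apply: big1 => e eE.
rewrite sqmonE mcoeffMX2 mset_le.
by rewrite (negbTE (F e eE)).
Qed.

Lemma ideal_nonface m : ~~ face (supp m) -> in_edge_ideal E ('X_[m] : {mpoly K[n]}).
Proof.
move=> /faceP; case/boolP: [exists e in E, e \subset supp m].
  case/exists_inP => e eE esub _.
  rewrite -(submK (_ : mset e <= m)%MM) ?mset_le // mpolyXD -sqmonE.
  by apply: idealM; apply: ideal_gen.
rewrite negb_exists_in => /forall_inP H []; exact: H.
Qed.

End Ideal.

Section Comb.
Variables (V : {set 'I_n}) (E C : {set {set 'I_n}}).
Hypothesis HC : two_collage V E C.

Definition W := \bigcup_(c in C) c.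
Definition Zs (G : {set 'I_n}) := G :|: [set u | (u \notin W) && face E (u |: G)].

Lemma outW e : e \in E -> exists v, forall x, x \in e -> x \notin W -> x = v.
Proof.
case: HC => _ H /H [v [_ [c cC ec]]]; exists v => x xe xW.
apply/eqP; apply: contraNT xW => xv.
apply/bigcupP; exists c => //; apply: (subsetP ec); by rewrite !inE xv.
Qed.

Lemma comb (G F : {set 'I_n}) : G \subset W -> face E G -> G \subset F -> F \subset Zs G ->
  face E F /\ F :&: W = G.
Proof.
move=> GW fG GF FZ.
have FWG : F :&: W \subset G.
  apply/subsetP => x /setIP[xF xW]; move: (subsetP FZ x xF).
  by rewrite !inE xW /= orbF.
split; last first.
  by apply/eqP; rewrite eqEsubset FWG subsetI GF GW.
apply/faceP => e eE; apply/negP => eF.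
case/boolP: (e \subset W) => eW.
  by move/faceP: fG => /(_ e eE); rewrite (subset_trans _ FWG) // subsetI eF eW.
have [u ue uW] : exists2 u, u \in e & u \notin W by apply/subsetPn.
have := subsetP FZ u (subsetP eF u ue); rewrite !inE (negbTE uW).
have [v Hv] := outW eE.
case/orP => [uG|/andP[_ fu]]; first by move: (subsetP GW u uG); rewrite (negbTE uW).
move/faceP: fu => /(_ e eE); apply/negP; apply/negPn/subsetP => x xe.
rewrite !inE; case/boolP: (x \in W) => xW.
  by apply/orP; right; apply: (subsetP FWG); rewrite inE xW (subsetP eF).
by rewrite (Hv x xe xW) (Hv u ue uW) eqxx.
Qed.

Lemma cover (F : {set 'I_n}) : face E F -> [/\ F :&: W \subset W, face E (F :&: W) & F \subset Zs (F :&: W)].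
Proof.
move=> fF; split; first exact: subsetIr.
  by apply: face_sub fF; apply: subsetIl.
apply/subsetP => x xF; rewrite !inE.
case/boolP: (x \in W) => xW; first by rewrite xF.
apply/orP; right; apply/andP; split => //; apply: face_sub fF; apply/subsetP => y; rewrite !inE.
by case/orP => [/eqP -> //|/andP[]].
Qed.

Lemma card_bound (G : {set 'I_n}) : C \subset E -> face E G -> G \subset W ->
  (#|G| <= \sum_(c in C) (#|c| - 1))%N.
Proof.
move=> CE; rewrite /W; move: G.
elim/big_rec2: _ => [G _|c y2 y1 cC IH G fG Gs].
  by rewrite subset0 => /eqP ->; rewrite cards0.
have -> : G = (G :&: c) :|: (G :&: y1) by rewrite -setIUr; apply/esym/setIidPl.
rewrite cardsU.
have h1 : (#|G :&: c| < #|c|)%N.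
  apply: proper_card; rewrite properE subsetIr /=; apply/negP => cG.
  move/faceP: fG => /(_ c (subsetP CE c cC)); rewrite (subset_trans cG) //.
  exact: subsetIl.
have h2 : (#|G :&: y1| <= y2)%N.
  apply: IH; first by apply: face_sub fG; apply: subsetIl.
  by apply/subsetP => x /setIP[xG xy]; move: (subsetP Gs x xG); rewrite inE xy orbT.
lia.
Qed.

End Comb.
End S.

Theorem theorem5p16 (K : fieldType) (n : nat) (V : {set 'I_n})
    (E C : {set {set 'I_n}}) :
  is_clutter V E -> two_collage V E C ->
  sreg_le K E (\sum_(e in C) (#|e| - 1))%N.
Proof.
move=> _ HC.
pose P := [set G : {set 'I_n} | (G \subset W C) && face E G].
have PP : forall G, (G \in P) = (G \subset W C) && face E G by move=> G; rewrite inE.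
exists #|P|, (fun i => enum_val i), (fun i => Zs E C (enum_val i)).
split; last first.
  move=> i; have := enum_valP i; rewrite PP => /andP[GW fG].
  by apply: (card_bound _ fG GW); case: HC.
split; first by move=> i; apply: subsetUl.
split.
  move=> g.
  pose f (i : 'I_#|P|) := \sum_(m <- msupp g | face E (supp m) && (supp m :&: W C == enum_val i))
     g@_m *: ('X_[m - mset (enum_val i)] : {mpoly K[n]}).
  exists f; split.
    move=> i m' /msupp_sum_le /flattenP [s /mapP [m]].
    rewrite mem_filter => /andP[/andP[fm /eqP e] _] -> /msuppZ_le.
    rewrite msuppX mem_seq1 => /eqP -> j jZ.
    rewrite mnmBE.
    suff -> : m j = 0%N by [].
    apply/eqP; apply: contraNT jZ => mj.
    have [_ _ sZ] := cover C fm; rewrite e in sZ.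
    by apply: (subsetP sZ); rewrite inE.
  have key : \sum_(i < #|P|) sqmon K (enum_val i) * f i =
             \sum_(m <- msupp g | face E (supp m)) g@_m *: 'X_[m].
    transitivity (\sum_(i < #|P|) \sum_(m <- msupp g)
       (if face E (supp m) && (supp m :&: W C == enum_val i) then g@_m *: 'X_[m] else 0)).
      apply: eq_bigr => i _; rewrite /f mulr_sumr big_mkcond; apply: eq_bigr => m _.
      case: ifP => // /andP[fm /eqP e].
      rewrite sqmonE -scalerAr -mpolyXD addmC submK // mset_le -e.
      exact: subsetIl.
    rewrite exchange_big /= [RHS]big_mkcond; apply: eq_bigr => m _.
    case: (boolP (face E (supp m))) => fm /=; last by rewrite big1.
    have [GW fG _] := cover C fm.
    have GP : supp m :&: W C \in P by rewrite PP GW fG.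
    rewrite (bigD1 (enum_rank_in GP (supp m :&: W C))) //= (enum_rankK_in GP GP) eqxx.
    rewrite big1 ?addr0 // => j ne; case: ifP => // /eqP e.
    by case/negP: ne; apply/eqP/enum_val_inj; rewrite (enum_rankK_in GP GP) e.
  rewrite key {1}(mpolyE g) (bigID (fun m => face E (supp m))) /=.
  rewrite [X in X - _]addrC addrK.
  apply: ideal_sum => m fm.
  rewrite -mul_mpolyC; apply: idealM; exact: ideal_nonface.
move=> f fsub fI i0; apply/eqP; apply: contraT => nz.
have [m' m'f] : exists m', m' \in msupp (f i0).
  move: nz; rewrite -msupp_eq0; case: (msupp (f i0)) => [//|m' s] _.
  by exists m'; rewrite inE eqxx.
pose m := (mset (enum_val i0) + m')%MM.
have term : forall i, (sqmon K (enum_val i) * f i)@_m != 0 ->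
    face E (supp m) /\ supp m :&: W C = enum_val i.
  move=> i; rewrite mulrC sqmonE mcoeffMX2; case: ifP => [le|]; last by rewrite eqxx.
  rewrite -mcoeff_msupp => mm.
  have := enum_valP i; rewrite PP => /andP[GW fG].
  apply: (comb HC GW fG); first by rewrite -mset_le.
  apply/subsetP => x; rewrite inE => mx.
  case/boolP: (x \in enum_val i) => xG; first by rewrite inE xG.
  apply/negPn/negP => xZ.
  have := fsub i _ mm x xZ; rewrite mnmBE msetE (negbTE xG) subn0.
  by move/eqP: mx.
have c0 : (sqmon K (enum_val i0) * f i0)@_m = (f i0)@_m'.
  by rewrite mulrC sqmonE mcoeffMX.
have nz0 : (sqmon K (enum_val i0) * f i0)@_m != 0 by rewrite c0 -mcoeff_msupp.
have [fm e0] := term i0 nz0.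
have msum : m \in msupp (\sum_(i < #|P|) sqmon K (enum_val i) * f i).
  rewrite mcoeff_msupp raddf_sum (bigD1 i0) //= big1 ?addr0 // => j ji.
  apply/eqP; apply: contraNT ji => nzj.
  have [_ ej] := term j nzj.
  by apply/eqP/enum_val_inj; rewrite -ej -e0.
by move: (ideal_supp fI msum); rewrite fm.
Qed.
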